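(* Let $F$ be a $4$-regular graph, let $E\subseteq E(F)$ be based in $F$, and let $C$ be an oriented Euler system of $F$. Then $\Gamma_{E,C}$ is an integral cycle basis of $F-E$.
   Context: Graphs: $G=(V,H,E,\epsilon)$ with finite sets of vertices $V$ and half-edges $H$, a partition $E$ of $H$ into unordered pairs (edges), and $\epsilon:H\to V$; loops and multiple edges allowed. $G-E'$ deletes the edges of $E'$. $E'\subseteq E(G)$ is based in $G$ if it contains exactly one edge of each connected component of $G$. A directed version orders each edge as (tail, head). A directed single transition is an ordered pair of distinct half-edges incident with a common vertex. A closed walk is a sequence $((h_1,h_2),\dots,(h_{n-1},h_n))$ of directed single transitions with $\{h_2,h_3\},\{h_4,h_5\},\dots,\{h_n,h_1\}$ edges, up to cyclic shift. $\sigma(D,W)\in\mathbb Z^{E}$ counts, at each edge, traversals by $W$ along its direction in $D$ minus traversals against it. An oriented circuit is a nonempty closed walk in which each half-edge occurs at most once (vertices may repeat). The cycle space of $D$ is the right null space over $\mathbb Q$ of its vertex-edge incidence matrix. A cycle basis of $G$ is a set $B$ of closed walks such that the $\sigma(D,W)$, $W\in B$, are pairwise distinct and form a basis of the cycle space of $D$; it is integral if every $\sigma(D,W)$, $W$ a closed walk of $G$, lies in the $\mathbb Z$-span of $\{\sigma(D,W'):W'\in B\}$ (independent of $D$). $F$ is $4$-regular if every vertex is incident with exactly $4$ half-edges. An oriented Euler system of $F$ consists of one oriented Eulerian circuit (traversing every edge exactly once) for each connected component of $F$; it visits each vertex exactly twice. For a vertex $v$, the oriented circuit induced by $C$ at $v$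 based on $E$ is the segment from $v$ back to $v$ of the oriented Eulerian circuit of the component of $v$ that does not traverse the edge of $E$ in that component, with the inherited orientation. $\Gamma_{E,C}$ is the set of all these oriented circuits, $v\in V(F)$. *)

(* Defs.v *)
From HB Require Import structures.
From mathcomp Require Import all_boot all_order all_algebra.
Set Implicit Arguments. Unset Strict Implicit. Unset Printing Implicit Defensive.
Import Order.TTheory GRing.Theory Num.Theory.

(* Graphs with half-edges.  A graph has a finite vertex type gV and a finite *)
(* edge type gE; the half-edges are the pairs (e, b), b : bool, so that the  *)
(* partition of the half-edges into edges is {(e,false),(e,true)}; geps is   *)
(* the incidence map epsilon : H -> V.  Loops and multiple edges allowed.   *)
Record graph := Graph { gV : finType; gE : finType; geps : (gE * bool)%type -> gV }.

Definition half (G : graph) := (gE G * bool)%type.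
Definition opp (G : graph) (h : half G) : half G := (h.1, ~~ h.2).

Definition trans (G : graph) := (half G * half G)%type.
Definition is_transition (G : graph) (t : trans G) : bool :=
  (t.1 != t.2) && (geps t.1 == geps t.2).

(* A closed walk ((h1,h2),...,(h_{n-1},h_n)) is represented by the sequence *)
(* of its transitions; the cyclic linking condition says that the second    *)
(* half-edge of each transition and the first half-edge of the next one     *)
(* (cyclically) form an edge.  Cyclic shifts are represented by rot.        *)
Definition walk (G : graph) := seq (trans G).
Definition closed_walk (G : graph) (W : walk G) : bool :=
  all (@is_transition G) W &&
  all2 (fun t u => u.1 == opp t.2) W (rot 1 W).

(* the half-edges from which W leaves along an edge: the traversal after    *)
(* transition (a,b) goes from b to opp b                                    *)
Definition departures (G : graph) (W : walk G) : seq (half G) := map snd W.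

Definition oriented_circuit (G : graph) (W : walk G) : bool :=
  [&& W != [::], closed_walk W & uniq (flatten [seq [:: t.1; t.2] | t <- W])].

Definition del (G : graph) (X : {set gE G}) : graph :=
  @Graph (gV G) {e : gE G | e \notin X} (fun h => geps (val h.1, h.2)).

(* Orientations, sigma, cycle space.  A directed version D of G is given by  *)
(* d : gE G -> bool: the edge e is ordered (tail, head) = ((e, d e),        *)
(* (e, ~~ d e)).                                                            *)
Local Open Scope ring_scope.

Definition sigma (G : graph) (d : gE G -> bool) (W : walk G) : {ffun gE G -> int} :=
  [ffun e => \sum_(h <- departures W | h.1 == e) (if h.2 == d e then 1 else -1)].

Definition sigmaQ (G : graph) (d : gE G -> bool) (W : walk G) : {ffun gE G -> rat} :=
  [ffun e => (sigma d W e)%:~R].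

(* vertex-edge incidence matrix of D (column of a loop is zero) *)
Definition incidence (G : graph) (d : gE G -> bool) (v : gV G) (e : gE G) : rat :=
  (geps (e, ~~ d e) == v)%:R - (geps (e, d e) == v)%:R.

Definition in_cycle_space (G : graph) (d : gE G -> bool) (x : {ffun gE G -> rat}) : Prop :=
  forall v : gV G, \sum_(e : gE G) incidence d v e * x e = 0.

Definition basis_of_cycle_space (G : graph) (d : gE G -> bool) (I : finType)
  (s : I -> {ffun gE G -> rat}) : Prop :=
  [/\ forall i, in_cycle_space d (s i),
      forall c : I -> rat, (forall e, \sum_(i : I) c i * s i e = 0) -> forall i, c i = 0 &
      forall x, in_cycle_space d x -> exists c : I -> rat, forall e, x e = \sum_(i : I) c i * s i e].

(* cycle basis, given as a family of closed walks indexed by a finite type  *)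
(* (pairwise distinct sigma-vectors = injectivity), for every orientation D *)
Definition cycle_basis (G : graph) (I : finType) (B : I -> walk G) : Prop :=
  (forall i, closed_walk (B i)) /\
  forall d : gE G -> bool,
    injective (fun i => sigma d (B i)) /\ basis_of_cycle_space d (fun i => sigmaQ d (B i)).

Definition integral (G : graph) (I : finType) (B : I -> walk G) : Prop :=
  forall d : gE G -> bool, forall W : walk G, closed_walk W ->
    exists c : I -> int, forall e, sigma d W e = \sum_(i : I) c i * sigma d (B i) e.

Definition integral_cycle_basis (G : graph) (I : finType) (B : I -> walk G) : Prop :=
  cycle_basis B /\ integral B.

Definition four_regular (G : graph) : Prop :=
  forall v : gV G, #|[set h : half G | geps h == v]| = 4%N.

Definition adj (G : graph) : rel (gV G) :=
  fun u v => [exists e : gE G, exists b : bool,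
                (geps (e, b) == u) && (geps (e, ~~ b) == v)].

Definition edge_in_comp (G : graph) (v : gV G) (e : gE G) : bool :=
  connect (@adj G) v (geps (e, false)).

Definition based (G : graph) (X : {set gE G}) : Prop :=
  forall v : gV G, #|[set e in X | edge_in_comp v e]| = 1%N.

Definition euler_circ (G : graph) (W : walk G) (v : gV G) : bool :=
  closed_walk W &&
  [forall e : gE G, count (fun h : half G => h.1 == e) (departures W) == edge_in_comp v e].

Definition euler_system (G : graph) (C : seq (walk G)) : Prop :=
  [/\ all (@closed_walk G) C,
      forall v : gV G, count (fun W => euler_circ W v) C = 1%N &
      all (fun W => [exists v, euler_circ W v]) C].

(* S is the oriented circuit induced by C at v based on X: rotating the     *)
(* Eulerian circuit W of v's component as (x,y) :: p ++ (z,u) :: q with both *)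
(* transitions (x,y), (z,u) at v, the segment from v back to v leaving via  *)
(* y and returning via z is the closed walk p followed by the transition    *)
(* (z,y); it is the one that traverses no edge of X.                        *)
Definition induced_circuit (G : graph) (X : {set gE G}) (C : seq (walk G))
  (v : gV G) (S : walk G) : Prop :=
  exists2 W, W \in C &
    exists n (x y z u : half G) (p q : walk G),
      [/\ rot n W = (x, y) :: p ++ (z, u) :: q,
          geps x = v, geps z = v,
          S = rcons p (z, y) &
          ~~ has (fun h : half G => h.1 \in X) (departures S)].

Definition lift_half (G : graph) (X : {set gE G}) (h : half G) : option (half (del X)) :=
  omap (fun e => (e, h.2)) (insub h.1 : option {e : gE G | e \notin X}).

Definition lift_trans (G : graph) (X : {set gE G}) (t : trans G) : option (trans (del X)) :=
  match lift_half X t.1, lift_half X t.2 with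
  | Some a, Some b => Some (a, b)
  | _, _ => None
  end.

Definition lift_walk (G : graph) (X : {set gE G}) (W : walk G) : walk (del X) :=
  pmap (lift_trans X) W.

(* Main.v *)
Require Import Defs.
From mathcomp Require Import all_boot all_order all_algebra.
From HB Require Import structures.
From mathcomp Require Import ring.
Set Implicit Arguments. Unset Strict Implicit. Unset Printing Implicit Defensive.
Import Order.TTheory GRing.Theory Num.Theory.
Import Defs.

Section Gen.
Variable G : graph.
Implicit Types (h : half G) (t : trans G) (W : walk G).

Lemma perm_rotE (T : eqType) n (s : seq T) : perm_eq (rot n s) s.
Proof. by rewrite perm_rot. Qed.

Definition lk (t u : trans G) : bool := u.1 == opp t.2.

Lemma oppK h : opp (opp h) = h.
Proof. by case: h => e b; rewrite /opp /= negbK. Qed.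

Lemma opp_neq h : opp h != h.
Proof. by case: h => e b; rewrite /opp /= xpair_eqE eqxx /=; case: b. Qed.

Lemma opp_fst h : (opp h).1 = h.1.
Proof. by []. Qed.

Lemma all2_cycle (s : walk G) (a b : trans G) :
  all2 lk (a :: s) (rcons s b) = path lk a (rcons s b).
Proof.
elim: s a => [|c s IH] a //.
have -> : all2 lk (a :: c :: s) (rcons (c :: s) b) = lk a c && all2 lk (c :: s) (rcons s b) by [].
by rewrite IH.
Qed.

Lemma closed_cycle W : closed_walk W -> cycle lk W.
Proof.
case/andP=> _; case: W => [|a s] //; rewrite rot1_cons => H.
by rewrite /= -all2_cycle; exact: H.
Qed.

Lemma closed_all W : closed_walk W -> all (@is_transition G) W.
Proof. by case/andP. Qed.

Lemma all2_fst (s s' : walk G) : all2 lk s s' -> map fst s' = map (fun t => opp t.2) s.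
Proof.
elim: s s' => [|a s IH] [|b s'] //= /andP[/eqP -> /IH ->] //.
Qed.

Lemma closed_fst W : closed_walk W -> map fst (rot 1 W) = map (fun t => opp t.2) W.
Proof. by case/andP=> _ /all2_fst. Qed.

Lemma closed_next W t : closed_walk W -> t \in W -> exists2 t', t' \in W & t'.1 = opp t.2.
Proof.
move=> cW tW; have: opp t.2 \in map fst (rot 1 W).
  by rewrite (closed_fst cW); apply/mapP; exists t.
by rewrite map_rot mem_rot => /mapP[t' t'W ->]; exists t'.
Qed.

Lemma closed_prev W t : closed_walk W -> t \in W -> exists2 t', t' \in W & t.1 = opp t'.2.
Proof.
move=> cW tW; have: t.1 \in map fst (rot 1 W) by rewrite map_rot mem_rot map_f.
by rewrite (closed_fst cW) => /mapP[t' t'W ->]; exists t'.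
Qed.

Lemma path_prev (a : trans G) (s : walk G) t : path lk a s -> t \in s ->
  exists2 pr, pr \in a :: s & lk pr t.
Proof.
elim: s a => [|b s IH] a //= /andP[ab ps]; rewrite inE => /orP[/eqP -> | ts].
  by exists a; rewrite ?mem_head.
by have [pr prs lpr] := IH _ ps ts; exists pr => //; rewrite inE prs orbT.
Qed.

Lemma path_const (R : Type) (f : trans G -> R) (a : trans G) (s : walk G) :
  path lk a s -> (forall pr t, t \in s -> lk pr t -> f t = f pr) -> forall t, t \in s -> f t = f a.
Proof.
elim: s a => [|b s IH] a //= /andP[ab ps] H t; rewrite inE => /orP[/eqP -> | ts].
  by apply: H; rewrite ?mem_head.
rewrite (IH b ps) ?(H a b) ?mem_head //.
by move=> pr t' t's; apply: H; rewrite inE t's orbT.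
Qed.

Definition EU (s : seq (half G)) := forall e, count (fun h : half G => h.1 == e) s <= 1.

Lemma EU_cons a s : EU (a :: s) -> EU s /\ forall h, h \in s -> h.1 != a.1.
Proof.
move=> H; split=> [e|h hs]; first by have := H e; rewrite /= => /(leq_trans (leq_addl _ _)).
apply/negP=> /eqP E; have := H a.1; rewrite /= eqxx add1n ltnS leqn0 eqn0Ngt -has_count.
by move/hasPn/(_ h hs); rewrite E eqxx.
Qed.

Lemma EU_eq s h h' : EU s -> h \in s -> h' \in s -> h.1 = h'.1 -> h = h'.
Proof.
elim: s => [|a s IH] //= /EU_cons[Es Ha]; rewrite !inE.
case/orP=> [/eqP->|hs]; case/orP=> [/eqP->|h's] //.
- by move=> E; move: (Ha _ h's); rewrite E eqxx.
- by move=> E; move: (Ha _ hs); rewrite E eqxx.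
- exact: IH.
Qed.

Lemma EU_uniq s : EU s -> uniq s.
Proof.
elim: s => [|a s IH] //= /EU_cons[Es Ha]; rewrite IH // andbT.
by apply/negP=> /Ha; rewrite eqxx.
Qed.

Lemma EU_opp s h : EU s -> h \in s -> opp h \notin s.
Proof.
move=> E hs; apply/negP=> ohs; have := EU_eq E hs ohs erefl.
by move=> /esym /eqP; rewrite (negbTE (opp_neq h)).
Qed.

Lemma EU_perm s s' : perm_eq s s' -> EU s -> EU s'.
Proof. by move/permP=> P E e; rewrite -P. Qed.

Lemma EU_catl s s' : EU (s ++ s') -> EU s.
Proof. by move=> E e; apply: leq_trans (E e); rewrite count_cat leq_addr. Qed.

Lemma EU_catr s s' : EU (s ++ s') -> EU s'.
Proof. by move=> E e; apply: leq_trans (E e); rewrite count_cat leq_addl. Qed.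

Local Open Scope ring_scope.
Definition cnt (s : seq (half G)) h : int := (count_mem h s)%:Z - (count_mem (opp h) s)%:Z.

Lemma cnt_in s h : EU s -> h \in s -> cnt s h = 1.
Proof.
move=> E hs; rewrite /cnt !count_uniq_mem ?EU_uniq // hs.
by rewrite (negbTE (EU_opp E hs)).
Qed.

Lemma cnt_opp_in s h : EU s -> opp h \in s -> cnt s h = -1.
Proof.
move=> E hs; rewrite /cnt !count_uniq_mem ?EU_uniq // hs.
by have := EU_opp E hs; rewrite oppK => /negbTE ->.
Qed.

Lemma cnt_out s h : h \notin s -> opp h \notin s -> cnt s h = 0.
Proof.
by move=> h1 h2; rewrite /cnt !(count_memPn _) ?subrr.
Qed.

Definition sgn (R : pzRingType) (d : gE G -> bool) h : R := if h.2 == d h.1 then 1 else -1.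

Lemma sigma_cnt d W h : sigma d W h.1 * sgn _ d h = cnt (departures W) h.
Proof.
rewrite /sigma ffunE; elim: (departures W) => [|k s IH].
  by rewrite big_nil mul0r /cnt /= subrr.
rewrite big_cons /cnt /=; case: eqP => [E|NE].
  rewrite mulrDl IH /cnt; clear IH; case: k E => k1 k2 /= ->; case: h => h1 h2 /=.
  rewrite /sgn /opp /= !xpair_eqE /= eqxx /=.
  by case: k2; case: h2; case: (d h1); rewrite /= ?PoszD ?addrA; ring.
rewrite IH /cnt; have -> : (k == h) = false by apply/eqP=> E; apply: NE; rewrite E.
by have -> : (k == opp h) = false by apply/eqP=> E; apply: NE; rewrite E.
Qed.

Lemma sumr_count (T : Type) (s : seq T) (P : pred T) :
  \sum_(k <- s) ((P k)%:R : rat) = (count P s)%:R.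
Proof.
elim: s => [|a s IH]; first by rewrite big_nil.
by rewrite big_cons IH /= natrD.
Qed.

Lemma cyc_sum d v (s : seq (half G)) :
  \sum_(e : gE G) incidence d v e *
     (\sum_(k <- s | k.1 == e) (if k.2 == d e then 1 else -1 : int))%:~R =
  \sum_(k <- s) (((geps (opp k) == v))%:R - ((geps k == v))%:R).
Proof.
elim: s => [|a s IH].
  by rewrite big_nil big1 // => e _; rewrite big_nil mulr0.
rewrite big_cons -IH.
have E : forall e, (\sum_(k <- a :: s | k.1 == e) (if k.2 == d e then 1 else -1 : int))%:~R =
   (\sum_(k <- s | k.1 == e) (if k.2 == d e then 1 else -1 : int))%:~R +
   (if a.1 == e then ((if a.2 == d e then 1 else -1 : int))%:~R else 0 : rat).
  by move=> e; rewrite big_cons; case: ifP => _; rewrite ?addr0 // rmorphD addrC.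
under eq_bigr do rewrite E mulrDr.
rewrite big_split /= addrC; congr (_ + _).
rewrite (bigD1 a.1) //= eqxx big1 ?addr0 => [|e /negbTE]; last first.
  by rewrite eq_sym => ->; rewrite mulr0.
clear E IH; case: a => e b /=; rewrite /incidence /opp /=.
by case: b; case: (d e); case: (geps (e, true) == v); case: (geps (e, false) == v);
  rewrite /= ?mulr1 ?mulrN1 ?subr0 ?sub0r ?opprB ?opprK.
Qed.

Lemma closed_cycle_space d W : closed_walk W -> in_cycle_space d (sigmaQ d W).
Proof.
move=> cW v.
under eq_bigr do rewrite /sigmaQ /sigma !ffunE.
rewrite cyc_sum sumrB !sumr_count; apply/eqP; rewrite subr_eq0; apply/eqP; congr (_%:R).
rewrite /departures.
have -> : count (fun k : half G => geps (opp k) == v) [seq i.2 | i <- W] =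
   count (fun k : half G => geps k == v) [seq opp i.2 | i <- W] by rewrite !count_map.
rewrite -(closed_fst cW) (permP (perm_map _ (perm_rotE 1 W))) !count_map.
apply: eq_in_count => t tW /=.
by have /andP[_ /eqP ->] := allP (closed_all cW) t tW.
Qed.
End Gen.

Section Dec.
Variable G : graph.
Local Open Scope ring_scope.

Record Dec (v : gV G) (x y z u : half G) (p q : walk G) : Prop := {
  dp1 : path (@lk G) (x,y) p;
  dp2 : lk (last (x,y) p) (z,u);
  dp3 : path (@lk G) (z,u) q;
  dp4 : lk (last (z,u) q) (x,y);
  dEU : EU (y :: map snd p ++ u :: map snd q);
  dtr : all (@is_transition G) ((x,y) :: p ++ (z,u) :: q);
  dx : geps x = v;
  dz : geps z = v }.

Definition Dc (s : seq (half G)) (t : trans G) : int := cnt s t.1 + cnt s t.2.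

Variables (v : gV G) (x y z u : half G) (p q : walk G).
Hypothesis D : Dec v x y z u p q.

Let dT := (y :: map snd p) ++ (u :: map snd q).
Let dS := rcons (map snd p) y.

Lemma dT_EU : EU dT. Proof. exact: (dEU D). Qed.
Lemma dT_uniq : uniq dT. Proof. exact: EU_uniq dT_EU. Qed.
Lemma dS_EU : EU dS.
Proof. apply: (@EU_perm _ (y :: map snd p)); first by rewrite perm_sym perm_rcons perm_refl.
exact: EU_catl dT_EU. Qed.
Lemma mem_dS h : (h \in dS) = (h \in y :: map snd p).
Proof. by rewrite mem_rcons. Qed.
Lemma dS_dT h : h \in dS -> h \in dT.
Proof. by rewrite mem_dS mem_cat => ->. Qed.
Lemma disj h : h \in y :: map snd p -> h \notin u :: map snd q.
Proof.
move=> hp; have := dT_uniq; rewrite cat_uniq => /and3P[_ /hasPn H _].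
by apply/negP=> /H /=; rewrite hp.
Qed.
Lemma oppx : opp x \in u :: map snd q.
Proof.
have /eqP E := dp4 D; rewrite /= in E; rewrite E oppK.
by rewrite -[u]/((z,u).2) -map_cons map_f // mem_last.
Qed.
Lemma oppz : opp z \in y :: map snd p.
Proof.
have /eqP E := dp2 D; rewrite /= in E; rewrite E oppK.
by rewrite -[y]/((x,y).2) -map_cons map_f // mem_last.
Qed.
Lemma q_out h : h \in u :: map snd q -> cnt dS h = 0 /\ cnt dS (opp h) = 0.
Proof.
move=> hq; have hT : h \in dT by rewrite mem_cat hq orbT.
have ho : opp h \notin dT by apply: EU_opp dT_EU hT.
have h1 : h \notin dS by rewrite mem_dS; apply/negP=> /disj; rewrite hq.
have h2 : opp h \notin dS by apply/negP=> /dS_dT; apply/negP.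
by split; apply: cnt_out; rewrite ?oppK.
Qed.

Lemma Dc_xy : Dc dS (x,y) = 1.
Proof.
rewrite /Dc /= (@cnt_in _ dS y dS_EU) ?mem_dS ?mem_head //.
have [_ ] := q_out oppx; rewrite oppK => ->; by rewrite add0r.
Qed.

Lemma Dc_zu : Dc dS (z,u) = -1.
Proof.
rewrite /Dc /= (@cnt_opp_in _ dS z dS_EU) ?mem_dS ?oppz //.
by have [-> _] := q_out (mem_head _ _); rewrite addr0.
Qed.

Lemma Dc_p t : t \in p -> Dc dS t = 0.
Proof.
move=> tp; have [pr prp /eqP E] := path_prev (dp1 D) tp.
have pr2 : pr.2 \in y :: map snd p by rewrite -[y]/((x,y).2) -map_cons map_f.
rewrite /Dc (@cnt_opp_in _ dS t.1 dS_EU) ?E ?oppK ?mem_dS //.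
by rewrite (@cnt_in _ dS t.2 dS_EU) ?mem_dS ?inE ?map_f ?orbT.
Qed.

Lemma Dc_q t : t \in q -> Dc dS t = 0.
Proof.
move=> tq; have [pr prq /eqP E] := path_prev (dp3 D) tq.
have pr2 : pr.2 \in u :: map snd q by rewrite -[u]/((z,u).2) -map_cons map_f.
have t2 : t.2 \in u :: map snd q by rewrite inE map_f ?orbT.
rewrite /Dc E; have [_ ->] := q_out pr2; have [-> _] := q_out t2.
by rewrite addr0.
Qed.

Lemma Dc_far t : (forall k, k \in dT -> k.1 != t.1.1) -> (forall k, k \in dT -> k.1 != t.2.1) ->
  Dc dS t = 0.
Proof.
move=> H1 H2; rewrite /Dc !cnt_out ?addr0 //; apply/negP=> /dS_dT.
- by move/H2; rewrite eqxx.
- by move/H2; rewrite eqxx.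
- by move/H1; rewrite eqxx.
- by move/H1; rewrite eqxx.
Qed.

Lemma dec_geps : [/\ geps x = v, geps y = v, geps z = v & geps u = v].
Proof.
have /allP H := dtr D.
have /andP[_ /eqP E1] := H _ (mem_head _ _).
have /andP[_ /eqP E2] : is_transition (z,u) by apply: H; rewrite inE mem_cat inE eqxx !orbT.
by rewrite /= in E1 E2; rewrite -E1 -E2 (dx D) (dz D).
Qed.

Lemma dec_uniq : uniq [:: x; y; z; u].
Proof.
have /allP H := dtr D.
have /andP[xy _] := H _ (mem_head _ _).
have /andP[zu _] : is_transition (z,u) by apply: H; rewrite inE mem_cat inE eqxx !orbT.
rewrite /= in xy zu.
have yT : y \in dT by rewrite mem_head.
have uT : u \in dT by rewrite mem_cat mem_head orbT.
have oxT : opp x \in dT by rewrite mem_cat oppx orbT.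
have ozT : opp z \in dT by rewrite mem_cat oppz.
rewrite /= !inE !negb_or xy zu /= andbT.
have [ne1 ne2] : x != z /\ x != u.
  split; apply/eqP=> E.
    by have := disj oppz; rewrite -E oppx.
  by have := EU_opp dT_EU uT; rewrite -E oxT.
have ne3 : y != z by apply/eqP=> E; have := EU_opp dT_EU yT; rewrite E ozT.
have ne4 : y != u by apply/eqP=> E; have := disj (mem_head y (map snd p)); rewrite E mem_head.
by rewrite ne1 ne2 ne3 ne4.
Qed.

Lemma dec_halves : four_regular G -> forall h, (geps h == v) = (h \in [:: x; y; z; u]).
Proof.
move=> F4 h.
have [gx gy gz gu] := dec_geps.
have sub : [:: x; y; z; u] \subset [set h | geps h == v].
  by apply/subsetP=> k; rewrite !inE => /or4P[]/eqP->; rewrite ?gx ?gy ?gz ?gu eqxx.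
have card : #|[:: x; y; z; u]| = #|[set h | geps h == v]|.
  by rewrite F4; apply/card_uniqP; exact: dec_uniq.
by have /(subset_cardP card) E := sub; rewrite E inE.
Qed.

Lemma dec_only : four_regular G -> forall t, t \in (x,y) :: p ++ (z,u) :: q -> geps t.2 = v ->
  t = (x,y) \/ t = (z,u).
Proof.
move=> F4 t; rewrite inE mem_cat inE => H gt.
have := dec_halves F4 t.2; rewrite gt eqxx => /esym; rewrite !inE.
have yT : y \in dT by rewrite mem_head.
have uT : u \in dT by rewrite mem_cat mem_head orbT.
have oxT : opp x \in dT by rewrite mem_cat oppx orbT.
have ozT : opp z \in dT by rewrite mem_cat oppz.
case/or4P: H => [/eqP->|tp|/eqP->|tq]; [by left|idtac|by right|idtac].
- have t2 : t.2 \in y :: map snd p by rewrite inE map_f ?orbT.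
  have t2T : t.2 \in dT by rewrite mem_cat t2.
  have U := dT_uniq; rewrite cat_uniq /= in U; case/andP: U => /andP[ynp _] _.
  case/or4P=> /eqP E.
  + by have := EU_opp dT_EU t2T; rewrite E oxT.
  + by move: ynp; rewrite -E map_f.
  + by have := EU_opp dT_EU t2T; rewrite E ozT.
  + by have := disj t2; rewrite E mem_head.
- have t2 : t.2 \in u :: map snd q by rewrite inE map_f ?orbT.
  have t2T : t.2 \in dT by rewrite mem_cat t2 orbT.
  have U := dT_uniq; rewrite cat_uniq /= in U; case/and3P: U => _ _ /andP[unq _].
  case/or4P=> /eqP E.
  + by have := EU_opp dT_EU t2T; rewrite E oxT.
  + by have := disj (mem_head y (map snd p)); rewrite -E t2.
  + by have := EU_opp dT_EU t2T; rewrite E ozT.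
  + by move: unq; rewrite -E map_f.
Qed.

End Dec.

Section Cons.
Variable G : graph.
Local Open Scope ring_scope.

Definition oQ (d : gE G -> bool) (xx : gE G -> rat) (h : half G) := xx h.1 * sgn rat d h.
Definition DQ d xx (t : trans G) := oQ d xx t.1 + oQ d xx t.2.

Lemma cons4 d (xx : {ffun gE G -> rat}) v a b c e :
  in_cycle_space d xx -> (forall h, (geps h == v) = (h \in [:: a; b; c; e])) ->
  uniq [:: a; b; c; e] -> oQ d xx a + oQ d xx b + oQ d xx c + oQ d xx e = 0.
Proof.
move=> H Hv U.
have E1 : \sum_(h : half G) (if geps h == v then oQ d xx h else 0) = - (\sum_(f : gE G) incidence d v f * xx f).
  rewrite (eq_bigr (fun h : half G => (fun f b => if geps (f, b) == v then oQ d xx (f, b) else 0) h.1 h.2)); last by case.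
  rewrite -(pair_bigA _ (fun f b => if geps (f, b) == v then oQ d xx (f, b) else 0)) /=.
  rewrite -sumrN; apply: eq_bigr => f _; rewrite big_bool /oQ /sgn /incidence /=.

  by case: (d f); case: (geps (f, true) == v); case: (geps (f, false) == v); rewrite /=; ring.
rewrite (H v) oppr0 in E1.
rewrite (eq_bigr (fun h => if h \in [:: a; b; c; e] then oQ d xx h else 0)) in E1; last by move=> h _; rewrite Hv.
rewrite -big_mkcond /= -big_uniq // in E1.
rewrite !big_cons big_nil in E1. move: E1. rewrite /=. move=> E1. rewrite -[RHS]E1. ring. Qed.

Lemma DQ_lin (I : finType) d (xx : gE G -> rat) (c : I -> rat) (s : I -> gE G -> rat) t :
  DQ d (fun f => xx f - \sum_i c i * s i f) t = DQ d xx t - \sum_i c i * DQ d (s i) t.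
Proof.
rewrite /DQ /oQ; under [in RHS]eq_bigr do rewrite mulrDr.
rewrite big_split /= !mulrBl !mulr_suml.
rewrite [X in _ = _ - (X + _)](eq_bigr (fun i => c i * s i t.1.1 * sgn rat d t.1)); last by move=> i _; rewrite mulrA.
rewrite [X in _ = _ - (_ + X)](eq_bigr (fun i => c i * s i t.2.1 * sgn rat d t.2)); last by move=> i _; rewrite mulrA.
ring.
Qed.

End Cons.
Local Open Scope ring_scope.

Lemma sgn_int (G : graph) d (h : half G) : (sgn int d h)%:~R = sgn rat d h.
Proof. by rewrite /sgn; case: ifP. Qed.

Lemma DQ_sigma (G : graph) d (S : walk G) t :
  DQ d (sigmaQ d S) t = (Dc (departures S) t)%:~R.
Proof.
have E h : (sigmaQ d S) h.1 * sgn rat d h = (cnt (departures S) h)%:~R.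
  by rewrite /sigmaQ ffunE -sgn_int -intrM sigma_cnt.
by rewrite /DQ /oQ !E /Dc intrD.
Qed.

Lemma count1_eq (T : eqType) (P : pred T) (s : seq T) a b :
  count P s = 1%N -> a \in s -> b \in s -> P a -> P b -> a = b.
Proof.
rewrite -size_filter => S a_s b_s Pa Pb.
have : a \in filter P s by rewrite mem_filter Pa.
have : b \in filter P s by rewrite mem_filter Pb.
by case: (filter P s) S => [|c [|]] //= _; rewrite !inE => /eqP -> /eqP ->.
Qed.

Lemma closed_walkE (G : graph) (W : walk G) : closed_walk W = all (@is_transition G) W && cycle (@lk G) W.
Proof.
rewrite /closed_walk; congr (_ && _); case: W => [|a s] //.
by rewrite rot1_cons /= -all2_cycle.
Qed.

Lemma all2_map (A B : Type) (f : A -> B) (r : B -> B -> bool) s s' :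
  all2 r (map f s) (map f s') = all2 (fun a b => r (f a) (f b)) s s'.
Proof. by elim: s s' => [|a s IH] [|b s'] //=; rewrite IH. Qed.

Lemma eq_all2' (A B : Type) (r1 r2 : A -> B -> bool) s s' :
  (forall a b, r1 a b = r2 a b) -> all2 r1 s s' = all2 r2 s s'.
Proof. by move=> H; elim: s s' => [|a s IH] [|b s'] //=; rewrite H IH. Qed.

Section Del.
Variables (F : graph) (X : {set gE F}).
Local Notation D := (del X).
Local Open Scope ring_scope.

Definition valh (h : half D) : half F := (val h.1, h.2).
Definition valt (t : trans D) : trans F := (valh t.1, valh t.2).

Lemma valh_inj : injective valh.
Proof. by case=> [a b] [c d] /= [/val_inj -> ->]. Qed.

Lemma is_trans_valt t : is_transition (valt t) = is_transition t.
Proof. by rewrite /is_transition /= (inj_eq valh_inj). Qed.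

Lemma closed_del (W : walk D) : closed_walk (map valt W) = closed_walk W.
Proof.
rewrite /closed_walk all_map (eq_all is_trans_valt); congr (_ && _).
rewrite -map_rot all2_map; apply: eq_all2' => t u /=.
by rewrite -[opp (valh t.2)]/(valh (opp t.2)) (inj_eq valh_inj).
Qed.

Lemma lift_valt (S : walk F) : (forall t, t \in S -> t.1.1 \notin X /\ t.2.1 \notin X) ->
  map valt (lift_walk X S) = S.
Proof.
elim: S => [|[[a b] [c e]] S IH] // H.
have [h1 h2] := H _ (mem_head _ _).
rewrite /lift_walk /= /lift_trans /lift_half (insubT (fun e => e \notin X) h1) (insubT (fun e => e \notin X) h2) /=.
rewrite -/(lift_walk X S) IH //.
by move=> t' t'S; apply: H; rewrite inE t'S orbT.
Qed.

Definition dext (dX : gE D -> bool) (e : gE F) : bool :=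
  if insub e is Some e' then dX e' else false.

Lemma dext_val dX (e' : gE D) : dext dX (val e') = dX e'.
Proof. by rewrite /dext valK. Qed.

Lemma sigma_del dX (W : walk D) (e' : gE D) :
  sigma dX W e' = sigma (dext dX) (map valt W) (val e').
Proof.
rewrite /sigma !ffunE /departures !big_map dext_val.
by apply: eq_bigl => t /=; rewrite val_eqE.
Qed.

Definition xext (x : {ffun gE D -> rat}) : {ffun gE F -> rat} :=
  [ffun e => if insub e is Some e' then x e' else 0].

Lemma xext_val x e' : xext x (val e') = x e'.
Proof. by rewrite ffunE valK. Qed.

Lemma xext_X x e : e \in X -> xext x e = 0.
Proof. by move=> eX; rewrite ffunE insubF // eX. Qed.

Lemma sum_del (f : gE F -> rat) : (forall e, e \in X -> f e = 0) ->
  \sum_(e : gE F) f e = \sum_(e' : gE D) f (val e').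
Proof.
move=> H; rewrite (bigID (fun e => e \in X)) /= big1 ?add0r //.
rewrite (reindex_omap (val : gE D -> gE F) insub); last first.
  by move=> e eX; rewrite insubT.
by apply: eq_bigl => -[e eX] /=; rewrite eX insubT /= eqxx.
Qed.

Lemma cyc_del dX x : in_cycle_space dX x -> in_cycle_space (dext dX) (xext x).
Proof.
move=> H v; rewrite sum_del; last by move=> e eX; rewrite xext_X // mulr0.
transitivity (\sum_(e' : gE D) incidence dX v e' * x e'); last exact: H v.
apply: eq_bigr => e' _.
by rewrite xext_val /incidence dext_val.
Qed.

End Del.

Section Main.
Variables (F : graph) (X : {set gE F}) (C : seq (walk F)).
Hypotheses (F4 : four_regular F) (HB : based X) (HE : euler_system C).
Local Open Scope ring_scope.
Implicit Types (W S : walk F) (v : gV F) (e : gE F) (h : half F).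

Lemma adj_sym : symmetric (@adj F).
Proof.
move=> a b; apply/idP/idP => /existsP[e /existsP[c /andP[H1 H2]]];
  apply/existsP; exists e; apply/existsP; exists (~~ c); by rewrite negbK H1 H2.
Qed.

Lemma comp_same (v1 v2 : gV F) (e : gE F) : edge_in_comp v1 e -> edge_in_comp v2 e ->
  forall e', edge_in_comp v1 e' = edge_in_comp v2 e'.
Proof.
rewrite /edge_in_comp => H1 H2 e'.
have S := sym_connect_sym adj_sym.
have H12 : connect (@adj F) v1 v2 by apply: connect_trans H1 _; rewrite S.
by rewrite (same_connect S H12).
Qed.

Lemma edge_comp_geps (h : half F) : edge_in_comp (geps h) h.1.
Proof.
case: h => e [|]; rewrite /edge_in_comp /=; last exact: connect0.
apply: connect1; apply/existsP; exists e; apply/existsP; exists true; by rewrite !eqxx.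
Qed.

Lemma inC_closed W : W \in C -> closed_walk W.
Proof. by case: HE => /allP H _ _ /H. Qed.

Lemma inC_comp W : W \in C -> exists v, euler_circ W v.
Proof. by case: HE => _ _ /allP H /H /existsP. Qed.

Lemma euler_count W v e : euler_circ W v ->
  count (fun h : half F => h.1 == e) (departures W) = edge_in_comp v e.
Proof. by case/andP=> _ /forallP /(_ e) /eqP. Qed.

Lemma inC_EU W : W \in C -> EU (departures W).
Proof. by move/inC_comp=> [v Hv] e; rewrite (euler_count e Hv) leq_b1. Qed.

Lemma euler_circ_same W v1 v2 : (forall e, edge_in_comp v1 e = edge_in_comp v2 e) ->
  euler_circ W v1 = euler_circ W v2.
Proof.
move=> H; rewrite /euler_circ; congr (_ && _); apply: eq_forallb => e; by rewrite H.
Qed.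

Lemma dep_comp W v h : euler_circ W v -> h \in departures W -> edge_in_comp v h.1.
Proof.
move=> Hv hW.
have H : (0 < count (fun k : half F => k.1 == h.1) (departures W))%N.
  by rewrite -has_count; apply/hasP; exists h.
by rewrite (euler_count _ Hv) lt0b in H.
Qed.

Lemma sameW W1 W2 h1 h2 : W1 \in C -> W2 \in C -> h1 \in departures W1 -> h2 \in departures W2 ->
  h1.1 = h2.1 -> W1 = W2.
Proof.
move=> C1 C2 d1 d2 E.
have [v1 E1] := inC_comp C1; have [v2 E2] := inC_comp C2.
have c1 := dep_comp E1 d1; have c2 := dep_comp E2 d2; rewrite -E in c2.
have S := comp_same c1 c2.
case: HE => _ /(_ v1) Hc _.
apply: (count1_eq Hc C1 C2 E1); by rewrite (euler_circ_same _ S).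
Qed.

Lemma exists_W e : exists2 W, W \in C &
  (exists2 t, t \in W & t.2.1 = e) /\ (exists2 t, t \in W & t.2.1 \in X).
Proof.
set v0 := geps (e, false).
case: HE => _ /(_ v0) Hc _.
have : has (fun W => euler_circ W v0) C by rewrite has_count Hc.
case/hasP=> W WC Ev; exists W => //.
have dep_e f : edge_in_comp v0 f -> exists2 t, t \in W & t.2.1 = f.
  move=> cf; have : has (fun h : half F => h.1 == f) (departures W).
    by rewrite has_count (euler_count f Ev) cf.
  by case/hasP=> h /mapP[t tW ->] /eqP <-; exists t.
split; first by apply: dep_e; rewrite /edge_in_comp connect0.
have := HB v0; move/eqP/cards1P=> [e0 E0].
have : e0 \in [set f in X | edge_in_comp v0 f] by rewrite E0 set11.
rewrite inE => /andP[e0X c0]; have [t tW te] := dep_e _ c0; exists t => //; by rewrite te.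
Qed.

Lemma induced_dec v S : induced_circuit X C v S ->
  exists W n x y z u p q, [/\ W \in C, rot n W = (x,y) :: p ++ (z,u) :: q,
    Dec v x y z u p q, S = rcons p (z,y) & ~~ has (fun h : half F => h.1 \in X) (departures S)].
Proof.
case=> W WC [n [x [y [z [u [p [q [Hr gx gz HS HX]]]]]]]].
exists W, n, x, y, z, u, p, q; split=> //.
have cW := inC_closed WC.
have cyc : cycle (@lk F) (rot n W) by rewrite rot_cycle closed_cycle.
rewrite Hr /= rcons_cat rcons_cons cat_path /= rcons_path in cyc.
case/and3P: cyc => P1 /andP[P2 P3] /andP[P4 P5].
constructor=> //.
- by apply/eqP; apply: injective_projections; apply/eqP.
- have E := inC_EU WC; move: E; apply: EU_perm.
  have -> : y :: [seq i.2 | i <- p] ++ u :: [seq i.2 | i <- q] = map snd (rot n W).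
    by rewrite Hr /= map_cat.
  by rewrite map_rot perm_sym perm_rotE.
- by rewrite -Hr (perm_all _ (perm_rotE _ _)) closed_all.
Qed.


Lemma sigmaQ_X d (S : walk F) e : ~~ has (fun h : half F => h.1 \in X) (departures S) -> e \in X ->
  sigmaQ d S e = 0.
Proof.
move=> H eX; rewrite /sigmaQ /sigma !ffunE big_hasC //.
apply: contra H => /hasP[h hS /eqP he]; apply/hasP; exists h => //; by rewrite he.
Qed.

Section Core.
Variable g : gV F -> walk F.
Variables (Wf : gV F -> walk F) (nf : gV F -> nat) (xf yf zf uf : gV F -> half F)
  (pf qf : gV F -> walk F).
Hypothesis Hd : forall v, [/\ Wf v \in C,
   rot (nf v) (Wf v) = (xf v, yf v) :: pf v ++ (zf v, uf v) :: qf v,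
   Dec v (xf v) (yf v) (zf v) (uf v) (pf v) (qf v), g v = rcons (pf v) (zf v, yf v) &
   ~~ has (fun h : half F => h.1 \in X) (departures (g v))].

Let dT v := (yf v :: map snd (pf v)) ++ (uf v :: map snd (qf v)).

Lemma HWC v : Wf v \in C. Proof. by case: (Hd v). Qed.
Lemma HDv v : Dec v (xf v) (yf v) (zf v) (uf v) (pf v) (qf v). Proof. by case: (Hd v). Qed.
Lemma HXv v : ~~ has (fun h : half F => h.1 \in X) (departures (g v)). Proof. by case: (Hd v). Qed.
Lemma memT v t : (t \in Wf v) = (t \in (xf v, yf v) :: pf v ++ (zf v, uf v) :: qf v).
Proof. by case: (Hd v) => _ <- _ _ _; rewrite mem_rot. Qed.
Lemma memdT v h : (h \in dT v) = (h \in departures (Wf v)).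
Proof.
case: (Hd v) => _ Hr _ _ _.
by rewrite /dT /departures -[in RHS](mem_rot (nf v)) -map_rot Hr /= map_cat.
Qed.
Lemma depg v : departures (g v) = rcons (map snd (pf v)) (yf v).
Proof. by case: (Hd v) => _ _ _ -> _; rewrite /departures map_rcons. Qed.

Lemma in_dT_edges v : exists2 s : seq (half F), (forall k, k \in s -> k \in dT v) &
   forall h, h \in [:: xf v; yf v; zf v; uf v] -> exists2 k, k \in s & k.1 = h.1.
Proof.
have D := HDv v.
exists [:: opp (xf v); yf v; opp (zf v); uf v].
  have h1 : opp (xf v) \in dT v by rewrite /dT mem_cat (oppx D) orbT.
  have h2 : yf v \in dT v by rewrite /dT mem_cat mem_head.
  have h3 : opp (zf v) \in dT v by rewrite /dT mem_cat (oppz D).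
  have h4 : uf v \in dT v by rewrite /dT mem_cat mem_head orbT.
  have A : all (fun k => k \in dT v) [:: opp (xf v); yf v; opp (zf v); uf v] by rewrite /= h1 h2 h3 h4.
  by move=> k; apply: (allP A).
move=> h; rewrite !inE => /or4P[]/eqP->.
- by exists (opp (xf v)); rewrite ?inE ?eqxx.
- by exists (yf v); rewrite ?inE ?eqxx ?orbT.
- by exists (opp (zf v)); rewrite ?inE ?eqxx ?orbT.
- by exists (uf v); rewrite ?inE ?eqxx ?orbT.
Qed.

Lemma geps_xf v : geps (xf v) = v. Proof. by case: (dec_geps (HDv v)). Qed.
Lemma geps_zf v : geps (zf v) = v. Proof. by case: (dec_geps (HDv v)). Qed.

Lemma dual v w : Dc (departures (g w)) (xf v, yf v) = (v == w)%:Z /\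
                 Dc (departures (g w)) (zf v, uf v) = - (v == w)%:Z.
Proof.
rewrite depg; case: (eqVneq v w) => [<-|vw].
  by rewrite (Dc_xy (HDv v)) (Dc_zu (HDv v)).
have Dw := HDv w.
case: (eqVneq (Wf v) (Wf w)) => [EW|NW].
  have gen t : t \in Wf v -> geps t.1 = v -> Dc (rcons (map snd (pf w)) (yf w)) t = 0.
    rewrite EW memT inE mem_cat inE => /or4P[/eqP->|tp|/eqP->|tq] gt.
    - by move: vw; rewrite -gt /= geps_xf eqxx.
    - exact: (Dc_p Dw)...
    - by move: vw; rewrite -gt /= geps_zf eqxx.
    - exact: (Dc_q Dw)...
  rewrite !gen ?memT ?inE ?mem_cat ?inE ?eqxx ?orbT ?geps_xf ?geps_zf //.
have far h : h \in [:: xf v; yf v; zf v; uf v] -> forall k, k \in dT w -> k.1 != h.1.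
  move=> hv k kT; apply/negP=> /eqP E.
  have [s Hs Hk] := in_dT_edges v; have [k' k's E'] := Hk h hv.
  have := Hs _ k's; rewrite memdT => k'W; move: kT; rewrite memdT => kW.
  by move: NW; rewrite (sameW (HWC v) (HWC w) k'W kW) ?eqxx // E' E.
rewrite !(@Dc_far _ (yf w) (uf w) (pf w) (qf w)) //; by move=> k kT; apply: far => //; rewrite !inE eqxx ?orbT.
Qed.


Lemma sum_delta (c : gV F -> rat) v (k : int) :
  \sum_w c w * ((k * (v == w)%:Z)%:~R) = c v * k%:~R.
Proof.
rewrite (bigD1 v) //= eqxx big1 ?addr0 ?mulr1 // => w /negbTE.
by rewrite eq_sym => ->; rewrite mulr0 mulr0.
Qed.

Lemma sgn_opp d (h : half F) : sgn rat d (opp h) = - sgn rat d h.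
Proof. by case: h => e b; rewrite /sgn /opp /=; case: b; case: (d e); rewrite ?opprK. Qed.

Lemma recon d (xx : {ffun gE F -> rat}) : in_cycle_space d xx -> (forall e, e \in X -> xx e = 0) ->
  forall e, xx e = \sum_v DQ d xx (xf v, yf v) * sigmaQ d (g v) e.
Proof.
move=> Hc HX0.
set c := fun v => DQ d xx (xf v, yf v).
set y := fun f => xx f - \sum_v c v * sigmaQ d (g v) f.
have A v : DQ d y (xf v, yf v) = 0 /\ DQ d y (zf v, uf v) = 0.
  rewrite /y !DQ_lin.
  under eq_bigr do rewrite DQ_sigma (proj1 (dual v _)) -[Posz _]mul1r.
  rewrite sum_delta mulr1 subrr; split=> //.
  under eq_bigr do rewrite DQ_sigma (proj2 (dual v _)) -mulN1r.
  rewrite sum_delta.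
  have D := HDv v.
  have := cons4 Hc (dec_halves D F4) (dec_uniq D).
  rewrite /c /DQ /= => E.
  have -> : oQ d xx (zf v) + oQ d xx (uf v) = - (oQ d xx (xf v) + oQ d xx (yf v)).
    by apply/eqP; rewrite -subr_eq0 opprK addrC addrA; apply/eqP; rewrite -E; ring.
  by rewrite mulrN1 subrr.
have B W t : W \in C -> t \in W -> DQ d y t = 0.
  move=> WC tW; set v := geps t.2.
  have cW := inC_closed WC.
  have t2v : t.2 \in [:: xf v; yf v; zf v; uf v] by rewrite -(dec_halves (HDv v) F4).
  have [s Hs Hk] := in_dT_edges v; have [k ks E] := Hk _ t2v.
  have kW : k \in departures (Wf v) by rewrite -memdT Hs.
  have EW : W = Wf v.
    apply: (sameW WC (HWC v) _ kW); first by apply: map_f tW.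
    by rewrite E.
  rewrite EW memT in tW.
  by case: (dec_only (HDv v) F4 tW erefl) => ->; case: (A v).
have Cc e : y e = 0.
  have [W WC [[t tW te] [t0 t0W t0X]]] := exists_W e.
  have cW := inC_closed WC.
  case: (rot_to t0W) => i s Hr.
  have cyc : cycle (@lk F) (rot i W) by rewrite rot_cycle closed_cycle.
  rewrite Hr /= rcons_path in cyc; case/andP: cyc => ps _.
  have f0 : oQ d y t0.2 = 0.
    rewrite /oQ /y HX0 // big1 ?subr0 ?mul0r // => v _.
    by rewrite sigmaQ_X ?mulr0 // HXv.
  have : oQ d y t.2 = oQ d y t0.2.
    have : t \in t0 :: s by rewrite -Hr mem_rot.
    rewrite inE => /orP[/eqP->//|ts].
    apply: (path_const (f := fun t => oQ d y t.2) ps) => // pr t' t's /eqP L.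
    have t'W : t' \in W by rewrite -(mem_rot i) Hr inE t's orbT.
    have := B W t' WC t'W; rewrite /DQ L /oQ /= sgn_opp mulrN addrC => /eqP.
    by rewrite subr_eq0 => /eqP ->.
  rewrite f0 /oQ te /sgn; case: ifP => _; rewrite ?mulr1 // mulrN1 => /eqP.
  by rewrite oppr_eq0 => /eqP.
move=> e; apply/eqP; rewrite -subr_eq0; apply/eqP; exact: Cc.
Qed.


Lemma path_same_head (a b : trans F) (p : walk F) : a.2 = b.2 -> path (@lk F) a p = path (@lk F) b p.
Proof. by move=> E; case: p => //= c p; rewrite /lk E. Qed.

Lemma last_same2 (a b : trans F) (p : walk F) : a.2 = b.2 -> (last a p).2 = (last b p).2.
Proof. by case: p. Qed.

Lemma Hgv v : g v = rcons (pf v) (zf v, yf v). Proof. by case: (Hd v). Qed.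

Lemma closed_g v : closed_walk (g v).
Proof.
have D := HDv v; rewrite Hgv closed_walkE all_rcons; apply/andP; split.
  apply/andP; split.
    have [_ gy gz _] := dec_geps D.
    have U := dec_uniq D; rewrite /= !inE !negb_or in U.
    case/andP: U => /and3P[_ _ _] /andP[/andP[yz _] _].
    by rewrite /is_transition /= eq_sym yz gy gz eqxx.
  by have := dtr D; rewrite /= all_cat => /and3P[_ -> _].
rewrite -rot1_cons rot_cycle /= rcons_path; apply/andP; split.
  by rewrite (@path_same_head _ (xf v, yf v)) //; exact: dp1 D.
have := dp2 D; rewrite /lk /= (@last_same2 (zf v, yf v) (xf v, yf v)) //.
Qed.

Lemma avoid_g v t : t \in g v -> t.1.1 \notin X /\ t.2.1 \notin X.
Proof.
move=> tg; have /hasPn H := HXv v.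
have t2 : t.2.1 \notin X by apply: H; exact: (map_f snd tg).
split=> //; have [t' t'g ->] := closed_prev (closed_g v) tg.
change (t'.2.1 \notin X); apply: H; exact: (map_f snd t'g).
Qed.

Lemma liftg v : map (@valt F X) (lift_walk X (g v)) = g v.
Proof. exact: lift_valt (@avoid_g v). Qed.

Lemma sigB d v (e' : gE (del X)) : sigma d (lift_walk X (g v)) e' = sigma (dext d) (g v) (val e').
Proof. by rewrite sigma_del liftg. Qed.

Lemma sigQB d v (e' : gE (del X)) : sigmaQ d (lift_walk X (g v)) e' = sigmaQ (dext d) (g v) (val e').
Proof.
have H1 : sigmaQ d (lift_walk X (g v)) e' = (sigma d (lift_walk X (g v)) e')%:~R by rewrite /sigmaQ ffunE.
have H2 : sigmaQ (dext d) (g v) (val e') = (sigma (dext d) (g v) (val e'))%:~R by rewrite /sigmaQ ffunE.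
by rewrite H1 H2 sigB.
Qed.

Lemma sigma_X_int d (S : walk F) e : ~~ has (fun h : half F => h.1 \in X) (departures S) -> e \in X ->
  sigma d S e = 0.
Proof.
move=> H eX; rewrite /sigma !ffunE big_hasC //.
apply: contra H => /hasP[h hS /eqP he]; apply/hasP; exists h => //; by rewrite he.
Qed.

Theorem main2 : integral_cycle_basis (fun v : gV (del X) => lift_walk X (g v)).
Proof.
have cB v : closed_walk (lift_walk X (g v)) by rewrite -closed_del liftg closed_g.
split; [split|].
- exact: cB.
- move=> d; set d' := dext d; split.
  + move=> v w /= E.
    have Ee e : sigma d' (g v) e = sigma d' (g w) e.
      case: (boolP (e \in X)) => eX; first by rewrite !sigma_X_int ?HXv.
      have := congr1 (fun f : {ffun gE (del X) -> int} => f (Sub e eX)) E.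
      by rewrite /= !sigB.
    have K (S : walk F) t : Dc (departures S) t = sigma d' S t.1.1 * sgn int d' t.1 + sigma d' S t.2.1 * sgn int d' t.2.
      by rewrite /Dc !sigma_cnt.
    have := (dual v w).1; rewrite K -!Ee -K (dual v v).1 eqxx.
    by case: eqP.
  + split.
    * by move=> v; apply: closed_cycle_space.
    * move=> c Hc v.
      have Hz e : 0 - \sum_w c w * sigmaQ d' (g w) e = 0.
        case: (boolP (e \in X)) => eX.
          by rewrite big1 ?subr0 // => w _; rewrite sigmaQ_X ?HXv ?mulr0.
        have := Hc (Sub e eX); under eq_bigr do rewrite sigQB.
        by rewrite /= => ->; rewrite subr0.
      have := DQ_lin d' (fun _ => 0) c (fun w => sigmaQ d' (g w)) (xf v, yf v).
      rewrite {1}/DQ /oQ /= !Hz !mul0r addr0.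
      under eq_bigr do rewrite DQ_sigma (proj1 (dual v _)) -[Posz _]mul1r.
      rewrite sum_delta /DQ /oQ !mul0r addr0 mulr1 sub0r => /eqP.
      by rewrite eq_sym oppr_eq0 => /eqP.
    * move=> x Hx; exists (fun v => DQ d' (xext x) (xf v, yf v)) => e'.
      have R := recon (cyc_del Hx) (@xext_X F X x) (val e').
      rewrite xext_val in R; rewrite R.
      by apply: eq_bigr => v _; rewrite sigQB.
- move=> d W cW; set d' := dext d; set W' := map (@valt F X) W.
  have cW' : closed_walk W' by rewrite closed_del.
  have noX : ~~ has (fun h : half F => h.1 \in X) (departures W').
    apply/hasPn => h; rewrite /departures /W' -map_comp => /mapP[t0 _ ->] /=; exact: (valP t0.2.1).
  exists (fun v => Dc (departures W') (xf v, yf v)) => e'.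
  apply: (@intr_inj rat).
  have R := recon (closed_cycle_space d' cW') (fun e eX => sigmaQ_X d' noX eX) (val e').
  rewrite sigma_del -/W' rmorph_sum.
  have -> : (sigma d' W' (val e'))%:~R = sigmaQ d' W' (val e') :> rat by rewrite /sigmaQ [in RHS]ffunE.
  rewrite R; apply: eq_bigr => v _.
  rewrite DQ_sigma rmorphM /= sigB; congr (_ * _); by rewrite /sigmaQ [in LHS]ffunE.
Qed.

End Core.

Lemma same_edge (k h : half F) : k.1 = h.1 -> k = h \/ k = opp h.
Proof.
case: k h => k1 k2 [h1 h2] /= ->; rewrite /opp /=.
by case: k2; case: h2; [left|right|right|left].
Qed.

Lemma rot_rot_ex (T : Type) m n (s : seq T) : exists k, rot m (rot n s) = rot k s.
Proof.
case: (leqP n (size s)) => Hn; last by exists m; rewrite (@rot_oversize _ n) // ltnW.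
case: (leqP m (size s)) => Hm; last by exists n; rewrite rot_oversize // size_rot ltnW.
by eexists; rewrite rot_add_mod.
Qed.

Lemma exists_induced v : exists S, induced_circuit X C v S.
Proof.
case: HE => _ /(_ v) Hc _.
have : has (fun W => euler_circ W v) C by rewrite has_count Hc.
case/hasP=> W WC Ev.
have cW := inC_closed WC; have EW := inC_EU WC.
have E1 h : geps h = v -> exists2 t, t \in W & t.2 = h \/ t.1 = h.
  move=> hv; have : has (fun k : half F => k.1 == h.1) (departures W).
    by rewrite has_count (euler_count _ Ev) -hv edge_comp_geps.
  case/hasP=> k /mapP[t tW ->] /eqP /same_edge [E|E].
    by exists t => //; left.
  have [t' t'W t'1] := closed_next cW tW; exists t' => //; right; by rewrite t'1 E oppK.
have trW t : t \in W -> geps t.1 = geps t.2.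
  by move=> tW; have /andP[_ /eqP] := allP (closed_all cW) t tW.
have [h0 hv0] : exists h, geps h = v.
  have : (0 < #|[set h | geps h == v]|)%N by rewrite F4.
  by case/card_gt0P => h; rewrite inE => /eqP; exists h.
have [t tW Ht] := E1 _ hv0.
have tv : geps t.1 = v by case: Ht => E; rewrite -hv0 -E ?trW.
case: (rot_to tW) => i s Hr.
have : has (fun t' => geps t'.1 == v) s.
  set A := [set h | geps h == v] :\: [set t.1; t.2].
  have : (0 < #|A|)%N.
    rewrite cardsD F4; have : (#|[set h | geps h == v] :&: [set t.1; t.2]| <= 2)%N.
      apply: leq_trans (subset_leq_card (subsetIr _ _)) _; by rewrite cards2; case: (_ != _).
    by case: #|_ :&: _| => [|[|[|]]].
  case/card_gt0P => h; rewrite !inE negb_or => /andP[/andP[h1 h2] /eqP hv].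
  have [t' t'W Ht'] := E1 _ hv.
  have : t' \in t :: s by rewrite -Hr mem_rot.
  rewrite inE => /orP[/eqP Et|t's].
    by case: Ht'; rewrite Et => E; [move: h2|move: h1]; rewrite E eqxx.
  apply/hasP; exists t' => //; case: Ht' => E; [by rewrite trW // E hv | by rewrite E hv].
case/hasP=> t2 t2s /eqP t2v; move: Hr; case/splitPr: t2s => p q Hr.
move: t tW Ht tv t2 Hr t2v => [x y] tW Ht tv [z u] Hr /= t2v.
rewrite /= in tv.
set dT := map snd (rot i W).
have EdT : EU dT by apply: (EU_perm _ EW); rewrite /dT map_rot perm_sym perm_rotE.
have dTE : dT = (y :: map snd p) ++ (u :: map snd q) by rewrite /dT Hr /= map_cat.
case: (boolP (has (fun h : half F => h.1 \in X) (departures (rcons p (z, y))))) => H1; last first.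
  exists (rcons p (z,y)), W => //; by exists i, x, y, z, u, p, q.
have [k Hk] := rot_rot_ex (size ((x,y) :: p)) i W.
have Hr2 : rot k W = (z,u) :: q ++ (x,y) :: p.
  by rewrite -Hk Hr (rot_size_cat ((x,y) :: p) ((z,u) :: q)).
exists (rcons q (x,u)), W => //; exists k, z, u, x, y, q, p; split=> //.
apply/negP=> H2.
move: H1 H2; rewrite /departures !map_rcons /= => /hasP[h1 h1p h1X] /hasP[h2 h2q h2X].
rewrite mem_rcons in h1p; rewrite mem_rcons in h2q.
have h1T : h1 \in dT by rewrite dTE mem_cat h1p.
have h2T : h2 \in dT by rewrite dTE mem_cat h2q orbT.
have h1W : h1 \in departures W by rewrite -(mem_rot i) -map_rot.
have h2W : h2 \in departures W by rewrite -(mem_rot i) -map_rot.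
have c1 := dep_comp Ev h1W; have c2 := dep_comp Ev h2W.
have /eqP/cards1P[e0 E0] := HB v.
have : h1.1 \in [set e in X | edge_in_comp v e] by rewrite inE h1X c1.
have : h2.1 \in [set e in X | edge_in_comp v e] by rewrite inE h2X c2.
rewrite E0 !inE => /eqP e2 /eqP e1.
have E12 : h1 = h2 by apply: (EU_eq EdT h1T h2T); rewrite e1 e2.
have := EU_uniq EdT; rewrite dTE cat_uniq => /and3P[_ /hasPn Hd _].
by have := Hd _ h2q; rewrite -E12 h1p.
Qed.

End Main.


Theorem mainTheorem16 (F : graph) (X : {set gE F}) (C : seq (walk F)) :
  four_regular F -> based X -> euler_system C ->
  (forall v : gV F, exists S : walk F, induced_circuit X C v S) /\
  (forall g : gV F -> walk F, (forall v, induced_circuit X C v (g v)) ->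
     integral_cycle_basis (fun v : gV (del X) => lift_walk X (g v))).
Proof.
move=> F4 HB HE; split; first exact: exists_induced.
move=> g Hg.
have H v : exists dat : (walk F * nat * (half F * half F * half F * half F) * (walk F * walk F)),
   [/\ dat.1.1.1 \in C,
       rot dat.1.1.2 dat.1.1.1 = (dat.1.2.1.1.1, dat.1.2.1.1.2) :: dat.2.1 ++ (dat.1.2.1.2, dat.1.2.2) :: dat.2.2,
       Dec v dat.1.2.1.1.1 dat.1.2.1.1.2 dat.1.2.1.2 dat.1.2.2 dat.2.1 dat.2.2,
       g v = rcons dat.2.1 (dat.1.2.1.2, dat.1.2.1.1.2) &
       ~~ has (fun h : half F => h.1 \in X) (departures (g v))].
  have [W [n [x [y [z [u [p [q Hd]]]]]]]] := induced_dec HE (Hg v).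
  by exists (W, n, (x, y, z, u), (p, q)).
have [f Hf] := fin_all_exists H.
exact: (@main2 F X C F4 HB HE g (fun v => (f v).1.1.1) (fun v => (f v).1.1.2)
  (fun v => (f v).1.2.1.1.1) (fun v => (f v).1.2.1.1.2) (fun v => (f v).1.2.1.2) (fun v => (f v).1.2.2)
  (fun v => (f v).2.1) (fun v => (f v).2.2) Hf).
Qed.
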